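(* Let $a,b\ge 0$ and $c>0$, and let $q:\mathbb R^M\to\mathbb R_+$ be a positive semidefinite quadratic form. Then the function $x\mapsto\left(a-b\,e^{-b\,q(x)}\right)e^{-c\,q(x)}$ is log-concave on $\mathbb R^M$ whenever $a\ge\frac{b^2+2bc}{c}$.
   Context: A function $f:\mathbb R^M\to\mathbb R_{\ge 0}$ is log-concave if $\log f$ is concave. *)

(* Defs.v *)
From HB Require Import structures.
From mathcomp Require Import all_boot all_order all_algebra.
From mathcomp Require Import all_classical all_reals all_analysis.
Set Implicit Arguments. Unset Strict Implicit. Unset Printing Implicit Defensive.
Import Order.TTheory GRing.Theory Num.Theory.
Local Open Scope ring_scope.

Definition quad_form (R : realType) (M : nat) (A : 'M[R]_M) (x : 'rV[R]_M) : R :=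
  (x *m A *m x^T) 0 0.

Definition psd_form (R : realType) (M : nat) (A : 'M[R]_M) : Prop :=
  forall x : 'rV[R]_M, 0 <= quad_form A x.

Definition elog (R : realType) (r : R) : \bar R :=
  if 0 < r then (ln r)%:E else -oo%E.

Definition concave_ext (R : realType) (M : nat) (g : 'rV[R]_M -> \bar R) : Prop :=
  forall (x y : 'rV[R]_M) (t : R), 0 < t < 1 ->
    let z := t *: x + (1 - t) *: y in
    (t%:E * g x + (1 - t)%:E * g y <= g z)%E.

Definition log_concave (R : realType) (M : nat) (f : 'rV[R]_M -> R) : Prop :=
  (forall x, 0 <= f x) /\ concave_ext (fun x => elog (f x)).

(* Main.v *)
Require Import Defs.
From HB Require Import structures.
From mathcomp Require Import all_boot all_order all_algebra.
From mathcomp Require Import all_classical all_reals all_analysis.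
From mathcomp Require Import ring lra.
Import Order.TTheory GRing.Theory Num.Theory.
Local Open Scope ring_scope.
Definition bil (R : realType) (M : nat) (A : 'M[R]_M) (x y : 'rV[R]_M) : R :=
  (x *m A *m y^T) 0 0.
Arguments bil {R M}.

Lemma quad_lin (R : realType) (M : nat) (A : 'M[R]_M) (t s : R) (x y : 'rV[R]_M) :
  quad_form A (t *: x + s *: y) =
  t ^+ 2 * quad_form A x + t * s * (bil A x y + bil A y x) + s ^+ 2 * quad_form A y.
Proof.
rewrite /quad_form /bil linearD /= !linearZ /= !mulmxDl !mulmxDr.
rewrite -!scalemxAl -!scalemxAr !mxE.
ring.
Qed.

Lemma quad_convex (R : realType) (M : nat) (A : 'M[R]_M) (t : R) (x y : 'rV[R]_M) :
  psd_form A -> 0 <= t <= 1 ->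
  quad_form A (t *: x + (1 - t) *: y) <= t * quad_form A x + (1 - t) * quad_form A y.
Proof.
move=> psd /andP[t0 t1].
have := psd (x - y).
have -> : x - y = 1 *: x + (-1) *: y by rewrite scale1r scaleN1r.
rewrite !quad_lin => h.
have : 0 <= t * (1 - t) by apply: mulr_ge0; lra.
move: h; set X := quad_form A x; set Y := quad_form A y; set B := bil A x y + bil A y x.
move=> h1 h2.
have := mulr_ge0 h2 h1. move=> h3.
nra.
Qed.
Lemma mono_core (R : realType) (a b c d s : R) :
  0 <= b -> 0 < c -> b ^+ 2 + 2 * b * c <= a * c -> 0 <= d -> 0 < s <= 1 ->
  (a - b * (s * expR (- (b * d)))) * expR (- (c * d)) <= a - b * s.
Proof.
move=> b0 c0 hac d0 /andP[s0 s1].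
set r := expR (- (b * d)); set w := expR (- (c * d)).
have r1 : 1 - b * d <= r by have := expR_ge1Dx (- (b * d)); rewrite /r; lra.
have w0 : 0 < w by exact: expR_gt0.
have w1 : w * (1 + c * d) <= 1.
  have := expR_ge1Dx (c * d) => h.
  have := ler_wpM2l (ltW w0) h.
  by rewrite /w -expRD addNr expR0.
have bd0 : 0 <= b * d by apply: mulr_ge0.
have cd0 : 0 <= c * d by apply: mulr_ge0 => //; exact: ltW.
have hw1 : w <= 1 by nra.
(* a - bs - aw + bsrw >= (a-b)(1-w) - b^2 d w *)
have e1 : b * s * w * (1 - r) <= b * w * (b * d).
  have : 1 - r <= b * d by lra.
  have h0 : 0 <= b * s * w by apply: mulr_ge0; [apply: mulr_ge0 => //; exact: ltW| exact: ltW].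
  move=> h; have := ler_wpM2l h0 h.
  have : b * s * w * (b * d) <= b * w * (b * d).
    have : b * w * (b * d) - b * s * w * (b * d) = (b * w * (b * d)) * (1 - s) by ring.
    have : 0 <= b * w * (b * d) * (1 - s).
      apply: mulr_ge0; last lra.
      apply: mulr_ge0 => //; apply: mulr_ge0 => //; exact: ltW.
    lra.
  lra.
have e2 : b * s * (1 - w) <= b * (1 - w).
  have : 0 <= b * (1 - w) * (1 - s) by apply: mulr_ge0; [apply: mulr_ge0; lra| lra].
  have : b * (1 - w) - b * s * (1 - w) = b * (1 - w) * (1 - s) by ring.
  lra.
have e3 : b ^+ 2 * (c * d * w) <= b ^+ 2 * (1 - w).
  apply: ler_wpM2l; first exact: sqr_ge0. nra.
have e4 : c * (b ^+ 2 * d * w) <= (a - b) * c * (1 - w) - b * c * (1 - w).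
  have : (b ^+ 2 + b * c) * (1 - w) <= (a * c - b * c) * (1 - w).
    apply: ler_wpM2r; lra.
  have : c * (b ^+ 2 * d * w) = b ^+ 2 * (c * d * w) by ring.
  lra.
have e5 : b ^+ 2 * d * w <= (a - b) * (1 - w).
  have : c * (b ^+ 2 * d * w) <= c * ((a - b) * (1 - w)).
    have : 0 <= b * c * (1 - w) by apply: mulr_ge0; [apply: mulr_ge0 => //; exact: ltW|lra].
    have : c * ((a - b) * (1 - w)) = (a - b) * c * (1 - w) by ring.
    lra.
  by rewrite ler_pM2l.
have : (a - b * (s * r)) * w = a - b * s - (a * (1 - w) - b * s * (1 - w) - b * s * w * (1 - r)) by ring.
have : b * w * (b * d) = b ^+ 2 * d * w by ring.
lra.
Qed.
Lemma exp_conv (R : realType) (t x y : R) : 0 <= t <= 1 ->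
  expR (t * x + (1 - t) * y) <= t * expR x + (1 - t) * expR y.
Proof.
case/andP=> t0 t1.
by have := @convex_expR R (Itv01 t0 t1) x y; rewrite !convRE /=.
Qed.

Lemma ln_conc (R : realType) (t x y : R) : 0 <= t <= 1 -> 0 < x -> 0 < y ->
  t * ln x + (1 - t) * ln y <= ln (t * x + (1 - t) * y).
Proof.
case/andP=> t0 t1 x0 y0.
by have := @concave_ln R (Itv01 t0 t1) x y x0 y0; rewrite !convRE /=.
Qed.

Section Main.
Variables (R : realType) (a b c : R).
Hypotheses (a0 : 0 <= a) (b0 : 0 <= b) (c0 : 0 < c) (hac : b ^+ 2 + 2 * b * c <= a * c).

Let G (u : R) := a - b * expR (- (b * u)).
Let F (u : R) := G u * expR (- (c * u)).

Let ab2 : 2 * b <= a.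
Proof.
have h : (2 * b) * c <= a * c.
  have := sqr_ge0 b. move: hac. set p := b ^+ 2. set q := 2 * b * c. lra.
by rewrite ler_pM2r in h.
Qed.

Let ab : b <= a.
Proof. have := ab2; have := b0; lra. Qed.

Let ab_lt : 0 < a -> b < a.
Proof. have := ab2; have := b0; lra. Qed.

Let G_ge {u : R} : 0 <= u -> a - b <= G u.
Proof.
move=> u0; rewrite /G.
have : expR (- (b * u)) <= 1 by rewrite expR_le1 oppr_le0; exact: mulr_ge0.
move=> h.
have : 0 <= b * (1 - expR (- (b * u))) by apply: mulr_ge0; [exact: b0|lra].
lra.
Qed.

Let G_gt0 {u : R} : 0 < a -> 0 <= u -> 0 < G u.
Proof. move=> a0' u0; have := (G_ge u0); have := ab_lt a0'; lra. Qed.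

Let F_ge0 {u : R} : 0 <= u -> 0 <= F u.
Proof.
move=> u0; apply: mulr_ge0; last exact: expR_ge0.
have := G_ge u0; have := ab; lra.
Qed.

Let F_gt0 {u : R} : 0 < a -> 0 <= u -> 0 < F u.
Proof. move=> a0' u0; apply: mulr_gt0; [exact: G_gt0|exact: expR_gt0]. Qed.

Let F_mono (u v : R) : 0 <= u -> u <= v -> F v <= F u.
Proof.
move=> u0 uv; set d := v - u.
have eb : expR (- (b * v)) = expR (- (b * u)) * expR (- (b * d)).
  by rewrite -expRD; congr expR; rewrite /d; ring.
have ec : expR (- (c * v)) = expR (- (c * u)) * expR (- (c * d)).
  by rewrite -expRD; congr expR; rewrite /d; ring.
rewrite /F /G eb ec.
have -> : (a - b * (expR (- (b * u)) * expR (- (b * d)))) *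
    (expR (- (c * u)) * expR (- (c * d))) =
    ((a - b * (expR (- (b * u)) * expR (- (b * d)))) * expR (- (c * d))) *
    expR (- (c * u)) by ring.
apply: ler_wpM2r; first exact: expR_ge0.
apply: mono_core => //.
- by rewrite /d; lra.
- apply/andP; split; first exact: expR_gt0.
  by rewrite expR_le1 oppr_le0; exact: mulr_ge0.
Qed.

Let lnF {u : R} : 0 < a -> 0 <= u -> ln (F u) = ln (G u) - c * u.
Proof.
move=> a0' u0; rewrite /F lnM ?posrE ?expR_gt0 ?G_gt0 // expRK; ring.
Qed.

Lemma main_real (t qx qy qz : R) : 0 < a -> 0 <= t <= 1 -> 0 <= qx -> 0 <= qy -> 0 <= qz ->
  qz <= t * qx + (1 - t) * qy ->
  t * ln (F qx) + (1 - t) * ln (F qy) <= ln (F qz).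
Proof.
move=> a0' /andP[t0 t1] qx0 qy0 qz0 hz.
set m := t * qx + (1 - t) * qy.
have m0 : 0 <= m by rewrite /m; apply: addr_ge0; apply: mulr_ge0 => //; lra.
have h1 : ln (F m) <= ln (F qz).
  by rewrite ler_ln ?posrE ?F_gt0 //; apply: F_mono.
have hG : t * G qx + (1 - t) * G qy <= G m.
  have e : expR (- (b * m)) <= t * expR (- (b * qx)) + (1 - t) * expR (- (b * qy)).
    have -> : - (b * m) = t * (- (b * qx)) + (1 - t) * (- (b * qy)) by rewrite /m; ring.
    by apply: exp_conv; apply/andP.
  have e' := ler_wpM2l b0 e.
  rewrite /G; move: e'; set E1 := expR (- (b * qx)); set E2 := expR (- (b * qy));
    set E := expR (- (b * m)) => e'.
  have : b * (t * E1 + (1 - t) * E2) = t * (b * E1) + (1 - t) * (b * E2) by ring.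
  lra.
have h2 : ln (t * G qx + (1 - t) * G qy) <= ln (G m).
  rewrite ler_ln ?posrE ?G_gt0 //.
  have := G_gt0 a0' qx0; have := G_gt0 a0' qy0 => g1 g2.
  have : 0 <= t * G qx by apply: mulr_ge0 => //; exact: ltW.
  have : 0 <= (1 - t) * G qy by apply: mulr_ge0; [lra| exact: ltW].
  have : t * G qx + (1 - t) * G qy = t * (G qx - G qy) + G qy by ring.
  nra.
have h3 := @ln_conc R t (G qx) (G qy) (ltac:(apply/andP; split => //)) (G_gt0 a0' qx0) (G_gt0 a0' qy0).
rewrite (lnF a0' qx0) (lnF a0' qy0).
rewrite (lnF a0' m0) in h1.
have : t * (ln (G qx) - c * qx) + (1 - t) * (ln (G qy) - c * qy) =
  t * ln (G qx) + (1 - t) * ln (G qy) - c * m by rewrite /m; ring.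
lra.
Qed.

End Main.

Theorem lemma2 (R : realType) (M : nat) (A : 'M[R]_M) (a b c : R) :
  0 <= a -> 0 <= b -> 0 < c -> psd_form A ->
  (b ^+ 2 + 2 * b * c) / c <= a ->
  log_concave (fun x : 'rV[R]_M =>
    (a - b * expR (- (b * quad_form A x))) * expR (- (c * quad_form A x))).
Proof.
move=> a0 b0 c0 psd h.
have hac : b ^+ 2 + 2 * b * c <= a * c by rewrite -ler_pdivrMr.
have ab2 : 2 * b <= a.
  have h' : (2 * b) * c <= a * c.
    have := sqr_ge0 b. move: hac. set p := b ^+ 2. set q := 2 * b * c. lra.
  by rewrite ler_pM2r in h'.
have Fge0 (u : R) : 0 <= u -> 0 <= (a - b * expR (- (b * u))) * expR (- (c * u)).
  move=> u0; apply: mulr_ge0; last exact: expR_ge0.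
  have : expR (- (b * u)) <= 1 by rewrite expR_le1 oppr_le0; exact: mulr_ge0.
  move=> e.
  have : 0 <= b * (1 - expR (- (b * u))) by apply: mulr_ge0 => //; lra.
  lra.
split; first by move=> x; apply: Fge0.
move=> x y t /andP[t0 t1] /=.
have [a0'|] := ltP 0 a; last first.
  move=> a_le0.
  have -> : a = 0 by apply/le_anti/andP.
  have -> : b = 0 by apply/le_anti/andP; split => //; lra.
  rewrite /elog !(mul0r, subr0) ltxx mulrNy gtr0_sg // mul1e addNye.
  exact: leNye.
have qge0 := psd.
have Fgt0 (u : R) : 0 <= u -> 0 < (a - b * expR (- (b * u))) * expR (- (c * u)).
  move=> u0; apply: mulr_gt0; last exact: expR_gt0.
  have : expR (- (b * u)) <= 1 by rewrite expR_le1 oppr_le0; exact: mulr_ge0.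
  move=> e.
  have : 0 <= b * (1 - expR (- (b * u))) by apply: mulr_ge0 => //; lra.
  lra.
rewrite /elog !Fgt0 // -!EFinM -EFinD lee_fin.
apply: (@main_real R a b c b0 c0 hac) => //.
all: try (by apply/andP; split; lra).
all: try (by apply: quad_convex => //; apply/andP; split; lra).
Qed.
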